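(* Let $R$ be a commutative ring with identity and $n\ge2$. The map $$\tau^{(n)}:(H^{(n-1)}_R,+)\to(U^{(n)}_R,\star),\qquad (x_0,\dots,x_{n-2})\mapsto\big(\boldsymbol{b}^{(1,n)}\big)^{x_0}\star\big(\boldsymbol{b}^{(2,n)}\big)^{x_1}\star\cdots\star\big(\boldsymbol{b}^{(n-1,n)}\big)^{x_{n-2}}$$ is a group isomorphism. Consequently, the map $\tau:(H_R,+)\to(U_R,\star)$ defined by letting the first $n$ terms of $\tau(\boldsymbol{x})$ be $\tau^{(n)}(x_0,\dots,x_{n-2})$ for every $n\ge2$ (and $\tau(\boldsymbol x)[0]=1$) is a well-defined group isomorphism; in particular $(U_{\mathbb{Z}},\star)\cong(H_{\mathbb{Z}},+)$.
   Context: $H_R$: sequences in $R$; $H_R^{(m)}$: length-$m$ sequences, with componentwise addition; $U_R=\{\boldsymbol a\in H_R:a_0=1\}$, $U^{(n)}_R$ its length-$n$ truncations, a group under the Hurwitz product $(\boldsymbol{a}\star\boldsymbol{b})_k=\sum_{h=0}^k\binom{k}{h}a_hb_{k-h}$ (for length-$n$ sequences computed for $k\le n-1$). $\boldsymbol{b}^{(1)}=(1,1,1,\dots)$; for $i\ge2$, $\boldsymbol{b}^{(i)}$ has entries $1$ at positions $0$ and $i$ and $0$ elsewhere; $\boldsymbol{b}^{(k,n)}$ is the truncation of $\boldsymbol{b}^{(k)}$ to length $n$. Powers: for $\boldsymbol{a}=(1,a_1,\dots)$ and $x\in R$, $\boldsymbol{a}^x[m]=\sum_{k=0}^mY_{m,k}(a_1,\dots,a_{m-k+1})\,x(x-1)\cdots(x-k+1)$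 with $Y_{m,k}(y_1,y_2,\dots)=\sum\frac{m!}{\prod_l j_l!(l!)^{j_l}}\prod_ly_l^{j_l}$ over nonnegative $(j_l)$, $\sum j_l=k$, $\sum lj_l=m$ ($Y_{0,0}=1$, $Y_{m,0}=0$ for $m\ge1$); over $\mathbb{Q}$-algebras this is the sequence with e.g.f. $A(t)^x$, and for positive integers $x$ it is the $x$-fold $\star$-power. *)

(* Defs.v *)
From HB Require Import structures.
From mathcomp Require Import all_boot all_order all_algebra.
Set Implicit Arguments. Unset Strict Implicit. Unset Printing Implicit Defensive.
Import Order.TTheory GRing.Theory Num.Theory.
Local Open Scope ring_scope.

Section Hurwitz.
Variable R : comPzRingType.

(* Infinite sequences H_R are functions nat -> R; length-n sequences
   H_R^(n) are finite functions {ffun 'I_n -> R} (with pointwise +). *)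

(* read the i-th entry of a length-n sequence (0 outside range, never used) *)
Definition at_ (n : nat) (a : {ffun 'I_n -> R}) (i : nat) : R :=
  match insub i with Some j => a j | None => 0 end.

Definition trunc (x : nat -> R) (n : nat) : {ffun 'I_n -> R} :=
  [ffun i : 'I_n => x (nat_of_ord i)].

Definition hprod (a b : nat -> R) : nat -> R :=
  fun k => \sum_(h < k.+1) 'C(k, h)%:R * a h * b (k - h)%N.

Definition hprodn (n : nat) (a b : {ffun 'I_n -> R}) : {ffun 'I_n -> R} :=
  [ffun k : 'I_n => hprod (at_ a) (at_ b) k].

Definition hunitn (n : nat) : {ffun 'I_n -> R} :=
  [ffun k : 'I_n => if nat_of_ord k == 0%N then 1 else 0].

(* partial Bell polynomial Y_{m,k}(y_1, y_2, ...); y is given as a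
   function nat -> R and only y 1, y 2, ... are used. j l encodes j_{l+1}. *)
Definition bellY (m k : nat) (y : nat -> R) : R :=
  \sum_(j : {ffun 'I_m -> 'I_m.+1} |
          ((\sum_(l < m) (j l : nat))%N == k) &&
          ((\sum_(l < m) (l.+1 * j l))%N == m))
    ((m`! %/ \prod_(l < m) ((j l)`! * (l.+1)`! ^ (j l)))%N%:R
       * \prod_(l < m) y l.+1 ^+ (j l)).

Definition ffact (x : R) (k : nat) : R := \prod_(i < k) (x - i%:R).

(* a^x [m] for a = (1, a_1, a_2, ...) *)
Definition hpow (a : nat -> R) (x : R) : nat -> R :=
  fun m => \sum_(k < m.+1) bellY m k a * ffact x k.

Definition hpown (n : nat) (a : {ffun 'I_n -> R}) (x : R) : {ffun 'I_n -> R} :=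
  [ffun m : 'I_n => hpow (at_ a) x m].

Definition bseq (i : nat) : nat -> R :=
  fun m => if i == 1%N then 1 else if (m == 0%N) || (m == i) then 1 else 0.

Definition bseqn (k n : nat) : {ffun 'I_n -> R} := trunc (bseq k) n.

Definition taun (n : nat) (x : {ffun 'I_n.-1 -> R}) : {ffun 'I_n -> R} :=
  \big[@hprodn n / hunitn n]_(i < n.-1) hpown (bseqn i.+1 n) (x i).

End Hurwitz.

(* Main.v *)
Require Import Defs.
From HB Require Import structures.
From mathcomp Require Import all_boot all_order all_algebra.
From mathcomp Require Import zify ring.
From Stdlib Require Import FunctionalExtensionality.
Import GRing.Theory.
Local Open Scope ring_scope.

Lemma tri_exchange (R : nmodType) (k : nat) (F : nat -> nat -> R) :
  \sum_(h < k.+1) \sum_(g < h.+1) F h g =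
  \sum_(g < k.+1) \sum_(t < (k - g).+1) F (g + t)%N g.
Proof.
transitivity (\sum_(h < k.+1) \sum_(g < k.+1 | (g < h.+1)%N) F h g).
  by apply: eq_bigr => h _; rewrite (big_ord_widen _ _ (ltn_ord h)).
rewrite (exchange_big_dep xpredT) //=; apply: eq_bigr => g _.
rewrite -(big_mkord (fun h => (g < h.+1)%N) (fun h => F h g)).
rewrite (@big_cat_nat _ _ _ g) /=; last by rewrite ltnW.
rewrite big_nat_cond big1 ?add0r; last first.
  by move=> i /andP[/andP[_ ig]]; rewrite ltnS leqNgt ig.
rewrite -{1}(add0n g) big_addn big_mkord subSn; last by rewrite -ltnS.
apply: eq_big => [t|t _]; first by rewrite ltnS leq_addl.
by rewrite addnC.
by [].
Qed.

Lemma binAux (k g t : nat) : (g + t <= k)%N ->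
  ('C(k, g + t) * 'C(g + t, g) = 'C(k, g) * 'C(k - g, t))%N.
Proof.
move=> le.
have P : (0 < g`! * t`! * (k - g - t)`!)%N by rewrite !muln_gt0 !fact_gt0.
apply/eqP; rewrite -(eqn_pmul2r P); apply/eqP.
have e1 : ('C(g + t, g) * (g`! * t`!) = (g+t)`!)%N.
  by rewrite -(bin_fact (leq_addr t g)) addKn.
have e2 : ('C(k - g, t) * (t`! * (k - g - t)`!) = (k - g)`!)%N.
  by rewrite bin_fact //; lia.
transitivity ('C(k, g + t) * ((g + t)`! * (k - (g + t))`!))%N.
  rewrite -e1 subnDA; ring.
rewrite bin_fact // -(bin_fact (_ : g <= k)%N); last lia.
rewrite -e2; ring.
Qed.

Section HP.
Variable R : comPzRingType.
Definition hdelta : nat -> R := fun k => if k == 0%N then 1 else 0.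

Lemma hprodC (a b : nat -> R) : hprod a b = hprod b a.
Proof.
apply: functional_extensionality => k; rewrite /hprod.
rewrite (reindex_inj rev_ord_inj) /=; apply: eq_bigr => h _.
have hk : (h <= k)%N by rewrite -ltnS.
by rewrite subSS bin_sub // subKn // mulrAC.
Qed.

Lemma hprod1 (a : nat -> R) : hprod a hdelta = a.
Proof.
apply: functional_extensionality => k; rewrite /hprod.
rewrite big_ord_recr /= subnn binn /hdelta /= mulr1 big1 ?add0r ?mul1r //.
move=> h _; have : (k - h != 0)%N by rewrite subn_eq0 -ltnNge ltn_ord.
by case: eqP => //; rewrite mulr0.
Qed.

Lemma hprodA (a b c : nat -> R) :
  hprod a (hprod b c) = hprod (hprod a b) c.
Proof.
apply: functional_extensionality => k; rewrite /hprod.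
under [RHS]eq_bigr => h _ do rewrite mulr_sumr mulr_suml.
rewrite (@tri_exchange _ k (fun h g => 'C(k, h)%:R * ('C(h, g)%:R * a g * b (h - g)%N) * c (k - h)%N)).
apply: eq_bigr => g _; rewrite mulr_sumr; apply: eq_bigr => t _.
have le : (g + t <= k)%N.
  have := ltn_ord t; rewrite ltnS leq_subRL; first by rewrite addnC.
  by rewrite -ltnS.
have E := congr1 (fun n => n%:R : R) (@binAux k g t le); rewrite /= !natrM in E.
rewrite addKn subnDA.
transitivity (('C(k, g)%:R * 'C(k - g, t)%:R) * a g * b t * c (k - g - t)%N).
  by rewrite !mulrA; congr (_ * _); rewrite -!mulrA; congr (_ * _); rewrite mulrCA.
rewrite -E !mulrA; congr (_ * _ * _); rewrite -!mulrA; congr (_ * _); rewrite mulrCA.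
Qed.

Lemma hprod1l (a : nat -> R) : hprod hdelta a = a.
Proof. by rewrite hprodC hprod1. Qed.

End HP.
HB.instance Definition _ (R : comPzRingType) := Monoid.isComLaw.Build (nat -> R) (@hdelta R) (@hprod R)
  (@hprodA R) (@hprodC R) (@hprod1l R).

Set Implicit Arguments. Unset Strict Implicit.

Section Fixed.
Variable N : nat.
Notation T := {ffun 'I_N -> 'I_N.+1}.
Definition szj (j : T) := (\sum_(l < N) (j l : nat))%N.
Definition wtj (j : T) := (\sum_(l < N) (l.+1 * j l))%N.
Definition Dj (j : T) := (\prod_(l < N) ((j l)`! * (l.+1)`! ^ (j l)))%N.
Definition decj (i : 'I_N) (j : T) : T := [ffun l => inord ((j l : nat) - (l == i))].
Definition incj (i : 'I_N) (j : T) : T := [ffun l => inord ((j l : nat) + (l == i))].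

Lemma decj_val (i : 'I_N) (j : T) (l : 'I_N) : (decj i j l : nat) = (j l - (l == i))%N.
Proof. rewrite ffunE inordK //; apply: leq_ltn_trans (ltn_ord (j l)); exact: leq_subr. Qed.

Lemma incj_val (i : 'I_N) (j : T) (l : 'I_N) : (j i < N)%N -> (incj i j l : nat) = (j l + (l == i))%N.
Proof.
move=> lt; rewrite ffunE inordK //; case: eqP => [->|_]; first by rewrite addn1 ltnS.
by rewrite addn0.
Qed.

Lemma incj_sat (i : 'I_N) (j : T) : (j i : nat) = N -> (incj i j i : nat) = 0%N.
Proof.
move=> e; rewrite ffunE eqxx e /inord /insubd insubN //=.
by rewrite addn1 ltnn.
Qed.

Lemma incj_decj (i : 'I_N) (j : T) : (0 < j i)%N -> incj i (decj i j) = j.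
Proof.
move=> p; apply/ffunP => l; apply: val_inj => /=.
have h := ltn_ord (j i).
rewrite incj_val ?decj_val; last by rewrite eqxx; lia.
by case: eqP => [->|_]; lia.
Qed.

Lemma decj_incj (i : 'I_N) (j : T) : (j i < N)%N -> decj i (incj i j) = j.
Proof.
move=> p; apply/ffunP => l; apply: val_inj => /=.
by rewrite decj_val incj_val // addnK.
Qed.

Lemma wtj_ge (j : T) (l : 'I_N) : (l.+1 * j l <= wtj j)%N.
Proof. by rewrite /wtj (bigD1 l) //= leq_addr. Qed.

Lemma szj_le_wtj (j : T) : (szj j <= wtj j)%N.
Proof. by apply: leq_sum => l _; rewrite leq_pmull. Qed.

Lemma big_decj (V : Type) (idx : V) (op : Monoid.com_law idx)
  (F : 'I_N -> nat -> V) (i : 'I_N) (j : T) : (0 < j i)%N ->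
  op (\big[op/idx]_(l < N) F l (decj i j l)) (F i (j i)) =
  op (\big[op/idx]_(l < N) F l (j l)) (F i (j i - 1)%N).
Proof.
move=> p; rewrite (bigD1 i) //= [in RHS](bigD1 i) //= decj_val eqxx /=.
have -> : \big[op/idx]_(l < N | l != i) F l (decj i j l) = \big[op/idx]_(l < N | l != i) F l (j l).
  by apply: eq_bigr => l /negbTE nl; rewrite decj_val nl subn0.
rewrite Monoid.mulmAC [in RHS]Monoid.mulmAC; congr (op _ _); apply: Monoid.mulmC.
Qed.

Lemma big_incj (V : Type) (idx : V) (op : Monoid.com_law idx)
  (F : 'I_N -> nat -> V) (i : 'I_N) (j : T) : (j i < N)%N ->
  op (\big[op/idx]_(l < N) F l (incj i j l)) (F i (j i)) =
  op (\big[op/idx]_(l < N) F l (j l)) (F i (j i).+1).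
Proof.
move=> p; have p' : (0 < incj i j i)%N by rewrite incj_val // eqxx addn1.
have := @big_decj V idx op F i (incj i j) p'; rewrite (@decj_incj i j p) incj_val // eqxx addn1 /= subn1 /=.
by move=> ->.
Qed.

Lemma szj_dec (i : 'I_N) (j : T) : (0 < j i)%N -> szj (decj i j) = (szj j).-1.
Proof.
move=> p; have := @big_decj _ _ addn (fun _ x => x) i j p; rewrite /szj /=.
move: (szj j) => s; lia.
Qed.
Lemma wtj_dec (i : 'I_N) (j : T) : (0 < j i)%N -> wtj (decj i j) = (wtj j - i.+1)%N.
Proof.
move=> p; have := @big_decj _ _ addn (fun l x => l.+1 * x)%N i j p; rewrite /wtj /=.
rewrite mulnBr muln1; have : (i.+1 <= i.+1 * j i)%N by rewrite leq_pmulr.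
move: (\sum_(l < N) _)%N (\sum_(l < N) _)%N (i.+1 * j i)%N => a b c; lia.
Qed.

Lemma Dj_dec (i : 'I_N) (j : T) : (0 < j i)%N -> Dj j = (Dj (decj i j) * (j i * (i.+1)`!))%N.
Proof.
move=> p; have := @big_decj _ _ muln (fun l x => x`! * (l.+1)`! ^ x)%N i j p; rewrite /Dj /=.
case: (j i : nat) p => [//|n] _; rewrite subSS subn0 factS expnS => E.
have P : (0 < n`! * (i.+1)`! ^ n)%N by rewrite muln_gt0 fact_gt0 expn_gt0 fact_gt0.
apply/eqP; rewrite -(eqn_pmul2r P) -E; apply/eqP; ring.
Qed.

Lemma szj_inc (i : 'I_N) (j : T) : (j i < N)%N -> szj (incj i j) = (szj j).+1.
Proof.
move=> p; have := @big_incj _ _ addn (fun _ x => x) i j p; rewrite /szj /=.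
move: (\sum_(l < N) _)%N (\sum_(l < N) _)%N => a b; lia.
Qed.

Lemma wtj_inc (i : 'I_N) (j : T) : (j i < N)%N -> wtj (incj i j) = (wtj j + i.+1)%N.
Proof.
move=> p; have := @big_incj _ _ addn (fun l x => l.+1 * x)%N i j p; rewrite /wtj /= mulnS.
move: (\sum_(l < N) _)%N (\sum_(l < N) _)%N (i.+1 * j i)%N => a b c; lia.
Qed.

Lemma Dj_gt0 (j : T) : (0 < Dj j)%N.
Proof. by apply: prodn_gt0 => l; rewrite muln_gt0 fact_gt0 expn_gt0 fact_gt0. Qed.

Lemma wtj0 (j : T) : wtj j = 0%N -> forall l, (j l : nat) = 0%N.
Proof.
move=> w l; have := wtj_ge j l; rewrite w leqn0 muln_eq0 /=; by move/eqP.
Qed.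

Lemma Dj_wt0 (j : T) : wtj j = 0%N -> Dj j = 1%N.
Proof. move=> w; rewrite /Dj big1 // => l _; by rewrite wtj0. Qed.

Lemma wtj_pos_le (j : T) (i : 'I_N) m : wtj j = m.+1 -> (0 < j i)%N -> (i <= m)%N.
Proof.
move=> w p; have := wtj_ge j i; rewrite w => h.
have : (i.+1 <= i.+1 * j i)%N by rewrite leq_pmulr.
lia.
Qed.

Lemma key_id (m : nat) (j : T) : wtj j = m.+1 ->
  (forall i : 'I_N, (0 < j i)%N -> (Dj (decj i j) %| (m - i)`!)%N) ->
  (Dj j * \sum_(i < N | (0 < j i)%N) ('C(m, i) * ((m - i)`! %/ Dj (decj i j))))%N = (m.+1)`!.
Proof.
move=> w IH; rewrite big_distrr /=.
rewrite (eq_bigr (fun i : 'I_N => m`! * (i.+1 * j i))%N); last first.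
  move=> i p; rewrite (Dj_dec p).
  have le := wtj_pos_le w p.
  have e1 := divnK (IH i p).
  have e2 := bin_fact le.
  rewrite factS in e2 *.
  transitivity ('C(m, i) * ((m - i)`! %/ Dj (decj i j) * Dj (decj i j)) * j i * (i.+1 * i`!))%N.
    ring.
  rewrite e1 -e2; ring.
rewrite -big_distrr /= factS mulnC; congr (_ * _)%N.
rewrite -w /wtj [in RHS](bigID (fun i : 'I_N => (0 < j i)%N)) /= [X in (_ = _ + X)%N]big1 ?addn0 //.
by move=> i; rewrite lt0n negbK => /eqP ->; rewrite muln0.
Qed.

Lemma Dj_dvd (m : nat) (j : T) : wtj j = m -> (Dj j %| m`!)%N.
Proof.
elim: m {-2}m (leqnn m) j => [|M IHM] m lem j w.
  by move: lem; rewrite leqn0 => /eqP e; subst m; rewrite Dj_wt0.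
case: m lem w => [|m] lem w; first by rewrite Dj_wt0.
have IH : forall i : 'I_N, (0 < j i)%N -> ((Dj (decj i j) %| (m - i)`!)%N)%N.
  move=> i p; apply: IHM; last by rewrite wtj_dec // w subSS.
  by move: lem; rewrite ltnS => h; apply: leq_trans (leq_subr _ _) h.
rewrite -(key_id w IH); exact: dvdn_mulr.
Qed.

Lemma coef_rec (m : nat) (j : T) : wtj j = m.+1 ->
  ((m.+1)`! %/ Dj j)%N = (\sum_(i < N | (0 < j i)%N) ('C(m, i) * ((m - i)`! %/ Dj (decj i j))))%N.
Proof.
move=> w; have IH : forall i : 'I_N, (0 < j i)%N -> ((Dj (decj i j) %| (m - i)`!)%N)%N.
  by move=> i p; apply: Dj_dvd; rewrite wtj_dec // w subSS.
by rewrite -(key_id w IH) mulKn // Dj_gt0.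
Qed.
End Fixed.

Definition jv M (j : {ffun 'I_M -> 'I_M.+1}) (l : nat) : nat :=
  if insub l is Some l' then nat_of_ord (j l') else 0%N.

Lemma jv_ord M (j : {ffun 'I_M -> 'I_M.+1}) (l : 'I_M) : jv j l = j l.
Proof. by rewrite /jv valK. Qed.

Lemma jv_out M (j : {ffun 'I_M -> 'I_M.+1}) (l : nat) : (M <= l)%N -> jv j l = 0%N.
Proof. by move=> h; rewrite /jv insubN // -leqNgt. Qed.

Lemma jv_le M (j : {ffun 'I_M -> 'I_M.+1}) (l : nat) : (jv j l <= M)%N.
Proof. rewrite /jv; case: insub => [l'|//]; by rewrite -ltnS. Qed.

Lemma big_widen0 (V : Type) (idx : V) (op : Monoid.law idx) M N (f : nat -> V) :
  (M <= N)%N -> (forall l, (M <= l)%N -> f l = idx) ->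
  \big[op/idx]_(l < N) f l = \big[op/idx]_(l < M) f l.
Proof.
move=> le h; rewrite -!(big_mkord xpredT) (@big_cat_nat _ _ _ M 0 N _ _ (leq0n M) le) /=.
rewrite [X in op _ X](_ : _ = idx) ?Monoid.mulm1 //.
rewrite big_nat_cond big1 // => l /andP[/andP[ml _] _]; exact: h.
Qed.

Lemma big_jv (V : Type) (idx : V) (op : Monoid.law idx) M N
  (j : {ffun 'I_M -> 'I_M.+1}) (G : nat -> nat -> V) :
  (M <= N)%N -> (forall l, G l 0%N = idx) ->
  \big[op/idx]_(l < N) G l (jv j l) = \big[op/idx]_(l < M) G l (j l).
Proof.
move=> le h; rewrite (@big_widen0 _ _ op M N (fun l => G l (jv j l)) le); last first.
  by move=> l ml; rewrite jv_out.
by apply: eq_bigr => l _; rewrite jv_ord.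
Qed.

Section Bell.
Variable R : comPzRingType.

Definition monj N (y : nat -> R) (j : {ffun 'I_N -> 'I_N.+1}) : R :=
  \prod_(l < N) y l.+1 ^+ (j l).

Definition bellN N m k (y : nat -> R) : R :=
  \sum_(j : {ffun 'I_N -> 'I_N.+1} | (szj j == k) && (wtj j == m))
    ((m`! %/ Dj j)%N%:R * monj y j).

Lemma bellY_N m k y : bellY m k y = bellN m m k y.
Proof. by []. Qed.

Lemma monj_dec N (y : nat -> R) (j : {ffun 'I_N -> 'I_N.+1}) (i : 'I_N) :
  (0 < j i)%N -> monj y j = y i.+1 * monj y (decj i j).
Proof.
move=> p; rewrite /monj (bigD1 i) //= [in RHS](bigD1 i) //= decj_val eqxx /=.
have -> : \prod_(l < N | l != i) y l.+1 ^+ decj i j l = \prod_(l < N | l != i) y l.+1 ^+ j l.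
  by apply: eq_bigr => l /negbTE nl; rewrite decj_val nl subn0.
by case: (j i : nat) p => [//|n] _; rewrite subSS subn0 exprS mulrA.
Qed.

Definition wid M N (j : {ffun 'I_M -> 'I_M.+1}) : {ffun 'I_N -> 'I_N.+1} :=
  [ffun l : 'I_N => inord (jv j l)].
Definition nar M N (j : {ffun 'I_N -> 'I_N.+1}) : {ffun 'I_M -> 'I_M.+1} :=
  [ffun l : 'I_M => inord (jv j l)].

Lemma jv_wid M N (j : {ffun 'I_M -> 'I_M.+1}) l : (M <= N)%N -> jv (wid N j) l = jv j l.
Proof.
move=> le; case: (ltnP l N) => lN.
  rewrite -[l]/(nat_of_ord (Ordinal lN)) jv_ord ffunE inordK //.
  by rewrite ltnS (leq_trans (jv_le j l) le).
by rewrite !jv_out // (leq_trans le lN).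
Qed.

Lemma jv_nar M N (j : {ffun 'I_N -> 'I_N.+1}) m l : (m <= M)%N -> wtj j = m ->
   jv (nar M j) l = jv j l.
Proof.
move=> le w.
have key : (jv j l <= M)%N /\ ((M <= l)%N -> jv j l = 0%N).
  case: (ltnP l N) => lN; last by rewrite jv_out.
  have hw := wtj_ge j (Ordinal lN); rewrite w /= in hw.
  rewrite -[l]/(nat_of_ord (Ordinal lN)) jv_ord.
  move: hw; case: (nat_of_ord (j _)) => [|n] hw; first by [].
  have h1 : (n.+1 <= l.+1 * n.+1)%N by rewrite leq_pmull.
  have h2 : (l.+1 <= l.+1 * n.+1)%N by rewrite leq_pmulr.
  move: (l.+1 * n.+1)%N hw h1 h2 => X hw h1 h2; split; [lia|]; move=> ml; rewrite /= in ml; lia.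
case: key => k1 k2; case: (ltnP l M) => lM.
  rewrite -[l]/(nat_of_ord (Ordinal lM)) jv_ord ffunE inordK //=.
by rewrite jv_out // k2.
Qed.

Lemma bellN_widen M N m k (y : nat -> R) : (m <= M)%N -> (M <= N)%N ->
  bellN M m k y = bellN N m k y.
Proof.
move=> mM MN; rewrite /bellN (reindex_onto (@wid M N) (@nar M N)); last first.
  move=> j /andP[_ /eqP w]; apply/ffunP => l; apply: val_inj.
  by rewrite ffunE /= inordK (jv_nar l mM w) ?jv_ord // ltnS jv_le.
have szE (j : {ffun 'I_M -> 'I_M.+1}) : szj (wid N j) = szj j.
  rewrite /szj -(big_jv (G := fun _ x => x) addn j MN) //.
  by apply: eq_bigr => l _; rewrite -jv_ord jv_wid.
have wtE (j : {ffun 'I_M -> 'I_M.+1}) : wtj (wid N j) = wtj j.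
  rewrite /wtj -(big_jv (G := (fun l x => l.+1 * x)%N) addn j MN); last by move=> l; rewrite muln0.
  by apply: eq_bigr => l _; rewrite -jv_ord jv_wid.
have DE (j : {ffun 'I_M -> 'I_M.+1}) : Dj (wid N j) = Dj j.
  rewrite /Dj -(big_jv (G := (fun l x => x`! * (l.+1)`! ^ x)%N) muln j MN) //.
  by apply: eq_bigr => l _; rewrite -jv_ord jv_wid.
have mE (j : {ffun 'I_M -> 'I_M.+1}) : monj y (wid N j) = monj y j.
  rewrite /monj -(big_jv (G := fun l x => y l.+1 ^+ x) *%R j MN) //.
  by apply: eq_bigr => l _; rewrite -jv_ord jv_wid.
have nw (j : {ffun 'I_M -> 'I_M.+1}) : nar M (wid N j) = j.
  apply/ffunP => l; apply: val_inj; by rewrite ffunE /= jv_wid // jv_ord inord_val.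
apply: eq_big => [j|j _]; last by rewrite DE mE.
by rewrite szE wtE nw eqxx andbT.
Qed.

Lemma bellN_rec N m k (y : nat -> R) : (m < N)%N ->
  bellN N m.+1 k.+1 y = \sum_(i < N) 'C(m, i)%:R * y i.+1 * bellN N (m - i)%N k y.
Proof.
move=> mN; rewrite /bellN.
rewrite (eq_bigr (fun j : {ffun 'I_N -> 'I_N.+1} => \sum_(i < N | (0 < j i)%N) ('C(m,i)%:R * y i.+1 *
   (((m - i)`! %/ Dj (decj i j))%N%:R * monj y (decj i j))))); last first.
  move=> j /andP[_ /eqP w]; rewrite coef_rec // natr_sum big_distrl.
  apply: eq_bigr => i p; by rewrite natrM (monj_dec y p) mulrACA.
rewrite (@exchange_big_dep R 0 +%R _ _ _ _ _ _ xpredT) //=; apply: eq_bigr => i _; rewrite -big_distrr /=.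
case: (leqP i m) => im; last by rewrite bin_small // !mul0r.
congr (_ * _).
rewrite (reindex_onto (incj i) (decj i)) /=; last by move=> j /andP[_ p]; exact: incj_decj.
apply: eq_big => [j|j /andP[_ /eqP ->]] //.
case: (ltnP (j i) N) => ji.
  rewrite szj_inc // wtj_inc // incj_val // eqxx addn1 /= decj_incj // eqxx andbT eqSS.
  case: (szj j == k) => //=; apply/eqP/eqP; lia.
have e : (j i : nat) = N by apply/eqP; rewrite eqn_leq ji -ltnS ltn_ord.
rewrite (incj_sat e) /= andbF; symmetry; apply/negbTE; rewrite negb_and; apply/orP; right.
have := wtj_ge j i; rewrite e => h.
have : (N <= i.+1 * N)%N by rewrite leq_pmull.
move: (i.+1 * N)%N h => X h1 h2; apply/eqP; lia.
Qed.

Lemma bellY_rec m k (y : nat -> R) :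
  bellY m.+1 k.+1 y = \sum_(i < m.+1) 'C(m, i)%:R * y i.+1 * bellY (m - i)%N k y.
Proof.
rewrite bellY_N bellN_rec //; apply: eq_bigr => i _.
by rewrite bellY_N (@bellN_widen (m - i) m.+1) // (leq_trans (leq_subr _ _)).
Qed.

Lemma bellY_0 m (y : nat -> R) : bellY m.+1 0 y = 0.
Proof.
rewrite bellY_N /bellN big1 // => j /andP[s /eqP w].
have z : forall l, (j l : nat) = 0%N.
  move=> l; move: s; rewrite /szj sum_nat_eq0 => /forallP /(_ l) /implyP h.
  by apply/eqP; apply: h.
by move: w; rewrite /wtj big1 // => l _; rewrite z muln0.
Qed.

Lemma bellY_big m k (y : nat -> R) : (m < k)%N -> bellY m k y = 0.
Proof.
move=> mk; rewrite bellY_N /bellN big1 // => j /andP[/eqP s /eqP w].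
by have := szj_le_wtj j; rewrite s w leqNgt mk.
Qed.

Lemma bellY_00 (y : nat -> R) : bellY 0 0 y = 1.
Proof.
rewrite bellY_N /bellN (big_pred1 [ffun l => ord0]).
  by rewrite /Dj /monj !big_ord0 mul1r.
move=> j /=; rewrite /szj /wtj !big_ord0 /=; by apply/esym/eqP/ffunP => -[l hl].
Qed.

End Bell.

Section E.
Variable R : comPzRingType.
Implicit Types (a b : nat -> R) (x z : R).

Lemma bump0 (i : nat) : bump 0 i = i.+1. Proof. by []. Qed.

Definition sh a : nat -> R := fun i => a i.+1.

Lemma ffactS x k : ffact x k.+1 = x * ffact (x - 1) k.
Proof.
rewrite /ffact big_ord_recl /= subr0; congr (_ * _); apply: eq_bigr => i _.
by rewrite bump0 -natr1 opprD addrA addrAC.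
Qed.

Lemma hpow0 a x : hpow a x 0 = 1.
Proof. by rewrite /hpow big_ord1 bellY_00 /ffact big_ord0 mulr1. Qed.

Lemma hprod_ext m a a' b b' : (forall i, (i <= m)%N -> a i = a' i) ->
  (forall i, (i <= m)%N -> b i = b' i) -> hprod a b m = hprod a' b' m.
Proof.
move=> ha hb; apply: eq_bigr => h _; rewrite ha ?hb //; last by rewrite -ltnS.
exact: leq_subr.
Qed.

Lemma hprod0 a b : hprod a b 0 = a 0%N * b 0%N.
Proof. by rewrite /hprod big_ord1 /= mul1r. Qed.

Lemma hprodZ (c : R) a b k : hprod (fun i => c * a i) b k = c * hprod a b k.
Proof.
rewrite /hprod mulr_sumr; apply: eq_bigr => h _.
by rewrite !mulrA [_ * c]mulrC.
Qed.

Lemma hpowS a x m : hpow a x m.+1 = x * hprod (sh a) (hpow a (x - 1)) m.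
Proof.
rewrite /hpow big_ord_recl bellY_0 mul0r add0r.
under eq_bigr => k _ do rewrite ?lift0 ?bump0 bellY_rec ffactS big_distrl /=.
rewrite exchange_big /= /hprod mulr_sumr; apply: eq_bigr => i _.
rewrite -(@big_widen0 _ _ +%R (m - i).+1 m.+1 (fun k => bellY (m - i) k a * ffact (x - 1) k)).
- rewrite mulr_sumr mulr_sumr; apply: eq_bigr => k _.
  by rewrite mulrCA /sh -!mulrA.
- lia.
- by move=> l hl; rewrite bellY_big ?mul0r.
Qed.

Lemma hprodS a b k : hprod a b k.+1 = hprod (sh a) b k + hprod a (sh b) k.
Proof.
rewrite /hprod big_ord_recl /= bin0 subn0.
under eq_bigr => h _ do rewrite ?lift0 ?bump0 binS natrD !mulrDl subSS.
rewrite big_split /= addrA addrC; congr (_ + _).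
rewrite [in RHS]big_ord_recl /= bin0 subn0 /sh big_ord_recr /= bin_small // !mul0r addr0.
congr (_ + _); apply: eq_bigr => h _; rewrite ?lift0 ?bump0 subnSK //.
Qed.
Lemma hpow_shift a x : sh (hpow a x) = fun i => x * hprod (sh a) (hpow a (x - 1)) i.
Proof. by apply: functional_extensionality => i; rewrite /sh hpowS. Qed.

Lemma hpow_add a x z : hpow a (x + z) = hprod (hpow a x) (hpow a z).
Proof.
apply: functional_extensionality => n.
suff H : forall m n, (n <= m)%N -> forall x z, hpow a (x + z) n = hprod (hpow a x) (hpow a z) n.
  exact: (H n).
clear n.
elim=> [|m IH] [|n] le x0 z0; try by rewrite hprod0 !hpow0 mulr1.
  by [].
case: (ltnP n m) => h; first exact: IH.
have e : n = m by apply/eqP; rewrite eqn_leq h andbT -ltnS.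
subst n.
rewrite hprodS !hpow_shift hprodZ [hprod (hpow a x0) _]hprodC hprodZ -!hprodA hpowS mulrDl.
have E1 : hprod (sh a) (hprod (hpow a (x0 - 1)) (hpow a z0)) m = hprod (sh a) (hpow a (x0 + z0 - 1)) m.
  apply: hprod_ext => // i hi; rewrite -IH //; congr (hpow a _ i).
  by rewrite addrAC.
have E2 : hprod (sh a) (hprod (hpow a (z0 - 1)) (hpow a x0)) m = hprod (sh a) (hpow a (x0 + z0 - 1)) m.
  apply: hprod_ext => // i hi; rewrite -IH //; congr (hpow a _ i).
  by rewrite addrC addrA.
by congr (_ * _ + _ * _); [exact: esym E1 | exact: esym E2].
Qed.

Lemma bseq_val i t : (0 < t)%N -> (t <= i)%N -> Defs.bseq R i t = if t == i then 1 else 0.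
Proof.
move=> t0 ti; rewrite /Defs.bseq; case: eqP => [e|ne1].
  subst i; have -> : t = 1%N by apply/eqP; rewrite eqn_leq ti t0.
  by [].
by rewrite -[t == 0%N]negbK -lt0n t0.
Qed.

Lemma hpow_bseq i n x : (n < i)%N ->
  hpow (Defs.bseq R i) x n.+1 = x * (if n.+1 == i then 1 else 0).
Proof.
move=> ni; rewrite hpowS /hprod big_ord_recr /= big1 ?add0r.
  by rewrite binn subnn hpow0 mulr1 mul1r /sh bseq_val.
move=> t _; rewrite /sh bseq_val //; last by apply: leq_trans ni; rewrite ltnS ltnW.
have : (t.+1 != i) by rewrite neq_ltn (leq_ltn_trans _ ni).
by move/negbTE ->; rewrite mulr0 mul0r.
Qed.

Lemma hpow_b_lt i x t : (0 < t)%N -> (t < i)%N -> hpow (Defs.bseq R i) x t = 0.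
Proof.
case: t => // n _ ni; rewrite hpow_bseq; last by apply: ltn_trans ni.
by rewrite ltn_eqF ?mulr0.
Qed.

Lemma hpow_b_eq i x : (0 < i)%N -> hpow (Defs.bseq R i) x i = x.
Proof. by case: i => // n _; rewrite hpow_bseq // eqxx mulr1. Qed.
End E.

Section F.
Variable R : comPzRingType.
Implicit Types (x y a : nat -> R).

Definition Pm x m : nat -> R :=
  \big[@hprod R/hdelta R]_(i < m) hpow (Defs.bseq R i.+1) (x i).
Definition tau x : nat -> R := fun n => Pm x n n.

Lemma Pm_0 x m : Pm x m 0 = 1.
Proof.
elim: m => [|m IH]; first by rewrite /Pm big_ord0.
by rewrite /Pm big_ord_recr /= -/(Pm x m) hprod0 IH hpow0 mulr1.
Qed.

Lemma Pm_S x m : Pm x m.+1 = hprod (Pm x m) (hpow (Defs.bseq R m.+1) (x m)).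
Proof. by rewrite /Pm big_ord_recr. Qed.

Lemma Pm_stable x m m' n : (m <= m')%N -> (n <= m)%N -> Pm x m' n = Pm x m n.
Proof.
move=> + nm; elim: m' => [|m' IH] le.
  by move: le; rewrite leqn0 => /eqP ->.
case: (ltnP m m'.+1) => lt; last first.
  by have -> : m = m'.+1 by apply/eqP; rewrite eqn_leq le lt.
rewrite Pm_S -IH //.
rewrite (hprod_ext (m:=n) (a':=Pm x m') (b':=hdelta R)) //; first by rewrite hprod1.
move=> t tn; case: t tn => [|t] tn; first by rewrite hpow0.
rewrite hpow_b_lt //; apply: leq_ltn_trans tn _; apply: leq_trans nm _; by [].
Qed.

Lemma Pm_ext x y m : (forall i, (i < m)%N -> x i = y i) -> Pm x m = Pm y m.
Proof. by move=> h; apply: eq_bigr => i _; rewrite h. Qed.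

Lemma tau0 x : tau x 0 = 1.
Proof. exact: Pm_0. Qed.

Lemma Pm_add x y m : Pm (fun i => x i + y i) m = hprod (Pm x m) (Pm y m).
Proof.
rewrite /Pm; under eq_bigr do rewrite hpow_add.
exact: big_split.
Qed.

Lemma tau_add x y : tau (fun i => x i + y i) = hprod (tau x) (tau y).
Proof.
apply: functional_extensionality => n; rewrite /tau Pm_add.
by apply: hprod_ext => i hi; rewrite (@Pm_stable _ i n).
Qed.

Lemma tauS x m : tau x m.+1 = Pm x m m.+1 + x m.
Proof.
rewrite /tau Pm_S /hprod big_ord_recr /= binn subnn hpow0 mulr1 mul1r addrC.
congr (_ + _); rewrite big_ord_recl /= bin0 Pm_0 subn0 hpow_b_eq // !mul1r big1 ?addr0 //.
move=> h _; have hm := ltn_ord h; rewrite hpow_b_lt ?mulr0 //; rewrite ?lift0 ?bump0; lia.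
Qed.

Lemma tau_prefix x y n : (forall i, (i < n)%N -> x i = y i) -> tau x n = tau y n.
Proof. by move=> h; rewrite /tau (Pm_ext h). Qed.

Lemma tau_inj_prefix x y N : (forall n, (n <= N)%N -> tau x n = tau y n) ->
  forall i, (i < N)%N -> x i = y i.
Proof.
elim: N => [//|N IH] h i iN.
have IH' := IH (fun n hn => h n (leq_trans hn (leqnSn N))).
case: (ltnP i N) => iN'; first exact: IH'.
have e : i = N by apply/eqP; rewrite eqn_leq iN' -ltnS iN.
subst i; have := h N.+1 (leqnn _); rewrite !tauS (Pm_ext IH').
exact: addrI.
Qed.

Fixpoint xs a m : nat -> R :=
  match m with
  | 0 => fun _ => 0
  | m'.+1 => fun i => if (i < m')%N then xs a m' i else a m'.+1 - Pm (xs a m') m' m'.+1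
  end.
Definition xinv a : nat -> R := fun i => xs a i.+1 i.

Lemma xs_stable a m i : (i < m)%N -> xs a m i = xinv a i.
Proof.
elim: m => [//|m IH] im /=; case: ifP => [lt|nlt]; first exact: IH.
have e : i = m by apply/eqP; rewrite eqn_leq -ltnS im leqNgt nlt.
by subst i; rewrite /xinv /= ltnn.
Qed.

Lemma tau_xinv a : a 0%N = 1 -> tau (xinv a) = a.
Proof.
move=> a0; apply: functional_extensionality => -[|m]; first by rewrite tau0.
rewrite tauS (@Pm_ext _ (xs a m)); last by move=> i im; rewrite xs_stable.
by rewrite /xinv /= ltnn addrC subrK.
Qed.
End F.

Section G.
Variable R : comPzRingType.

Lemma at_ord n (a : {ffun 'I_n -> R}) (i : 'I_n) : at_ a i = a i.
Proof. by rewrite /at_ valK. Qed.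

Lemma at_out n (a : {ffun 'I_n -> R}) i : (n <= i)%N -> at_ a i = 0.
Proof. by move=> h; rewrite /at_ insubN // -leqNgt. Qed.

Lemma at_lt n (a : {ffun 'I_n -> R}) k (h : (k < n)%N) : at_ a k = a (Ordinal h).
Proof. by rewrite -at_ord. Qed.

Lemma at_hprodn n (A B : {ffun 'I_n -> R}) k : (k < n)%N ->
  at_ (hprodn A B) k = hprod (at_ A) (at_ B) k.
Proof. by move=> h; rewrite (at_lt _ h) ffunE. Qed.

Lemma at_hunitn n k : (k < n)%N -> at_ (hunitn R n) k = hdelta R k.
Proof. by move=> h; rewrite (at_lt _ h) ffunE. Qed.

Lemma bellY_ext m k (y y' : nat -> R) : (forall l, (l <= m)%N -> y l = y' l) ->
  bellY m k y = bellY m k y'.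
Proof.
move=> h; apply: eq_bigr => j _; congr (_ * _); apply: eq_bigr => l _.
by rewrite h.
Qed.

Lemma hpow_ext (a a' : nat -> R) x m : (forall l, (l <= m)%N -> a l = a' l) ->
  hpow a x m = hpow a' x m.
Proof. by move=> h; apply: eq_bigr => k _; rewrite (bellY_ext _ h). Qed.

Lemma at_hpown n (A : {ffun 'I_n -> R}) y k : (k < n)%N ->
  at_ (hpown A y) k = hpow (at_ A) y k.
Proof. by move=> h; rewrite (at_lt _ h) ffunE. Qed.

Lemma at_bseqn i n k : (k < n)%N -> at_ (bseqn R i n) k = Defs.bseq R i k.
Proof. by move=> h; rewrite (at_lt _ h) ffunE. Qed.

Lemma at_big n p (F0 : 'I_p -> {ffun 'I_n -> R}) (G0 : 'I_p -> nat -> R) :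
  (forall i k, (k < n)%N -> at_ (F0 i) k = G0 i k) ->
  forall k, (k < n)%N ->
  at_ (\big[@hprodn R n/hunitn R n]_(i < p) F0 i) k = (\big[@hprod R/hdelta R]_(i < p) G0 i) k.
Proof.
elim: p F0 G0 => [|p IH] F0 G0 h k kn.
  by rewrite !big_ord0 at_hunitn.
rewrite !big_ord_recl at_hprodn //; apply: hprod_ext => i hi.
  by rewrite h //; exact: leq_ltn_trans hi kn.
rewrite (IH _ (fun i => G0 (lift ord0 i))) //; last exact: leq_ltn_trans hi kn.
move=> i' k' hk'; exact: h.
Qed.

Lemma taunE n (x : {ffun 'I_n.-1 -> R}) k : (k < n)%N -> at_ (taun x) k = tau (at_ x) k.
Proof.
move=> kn; rewrite /taun (at_big (G0 := fun i : 'I_n.-1 => hpow (Defs.bseq R i.+1) (x i))) //.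
  rewrite -/(Pm _ _) /tau.
  rewrite (_ : \big[@hprod R/hdelta R]_(i < n.-1) _ = Pm (at_ x) n.-1); last first.
    by apply: eq_bigr => i _; rewrite at_ord.
  by apply: Pm_stable => //; rewrite -ltnS (leq_trans kn) // leqSpred.
move=> i k' hk'; rewrite at_hpown //; apply: hpow_ext => l hl.
by rewrite at_bseqn // (leq_ltn_trans hl hk').
Qed.
End G.

Unset Implicit Arguments. Set Strict Implicit.

Lemma infinite_part (R : comPzRingType) :
  (exists tau : (nat -> R) -> (nat -> R),
     (forall x : nat -> R, tau x 0%N = 1) /\
     (forall (x : nat -> R) (n : nat), (1 < n)%N ->
        forall i : 'I_n, tau x i = taun (trunc x n.-1) i) /\
     (forall x y : nat -> R, tau (fun i => x i + y i) = hprod (tau x) (tau y)) /\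
     (forall x y : nat -> R, tau x = tau y -> x = y) /\
     (forall a : nat -> R, a 0%N = 1 -> exists x : nat -> R, tau x = a)).
Proof.
exists (@tau R); split; first exact: tau0.
split.
  move=> x n n1 i; rewrite -at_ord taunE //; apply: tau_prefix => l li.
  have ln : (l < n.-1)%N by apply: leq_trans li _; rewrite -ltnS prednK ?ltn_ord // ltnW.
  by rewrite (at_lt _ ln) ffunE.
split; first exact: tau_add.
split.
  move=> x y E; apply: functional_extensionality => i.
  by apply: (@tau_inj_prefix _ _ _ i.+1) => // n _; rewrite E.
move=> a a0; exists (xinv a); exact: tau_xinv.
Qed.

Theorem mainTheorem8 (R : comPzRingType) :
  (forall n : nat, (1 < n)%N ->
     (forall x : {ffun 'I_n.-1 -> R}, at_ (taun x) 0 = 1) /\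
     (forall x y : {ffun 'I_n.-1 -> R}, taun (x + y) = hprodn (taun x) (taun y)) /\
     injective (@taun R n) /\
     (forall a : {ffun 'I_n -> R}, at_ a 0 = 1 ->
        exists x : {ffun 'I_n.-1 -> R}, taun x = a)) /\
  (exists tau : (nat -> R) -> (nat -> R),
     (forall x : nat -> R, tau x 0%N = 1) /\
     (forall (x : nat -> R) (n : nat), (1 < n)%N ->
        forall i : 'I_n, tau x i = taun (trunc x n.-1) i) /\
     (forall x y : nat -> R, tau (fun i => x i + y i) = hprod (tau x) (tau y)) /\
     (forall x y : nat -> R, tau x = tau y -> x = y) /\
     (forall a : nat -> R, a 0%N = 1 -> exists x : nat -> R, tau x = a)) /\
  (exists f : (nat -> int) -> (nat -> int),
     (forall x, f x 0%N = 1) /\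
     (forall x y : nat -> int, f (fun i => x i + y i) = hprod (f x) (f y)) /\
     (forall x y, f x = f y -> x = y) /\
     (forall a : nat -> int, a 0%N = 1 -> exists x, f x = a)).
Proof.
split; last first.
  split; first exact: infinite_part.
  have [f [h1 [_ [h3 [h4 h5]]]]] := infinite_part int.
  by exists f.
move=> n n1.
have n0 : (0 < n)%N by apply: ltnW.
have atD : forall x y : {ffun 'I_n.-1 -> R}, at_ (x + y) = (fun i => at_ x i + at_ y i).
  move=> x y; apply: functional_extensionality => i.
  case: (ltnP i n.-1) => h; first by rewrite !(at_lt _ h); exact: ffunE.
  by rewrite !at_out // addr0.
split; first by move=> x; rewrite taunE // tau0.
split.
  move=> x y; apply/ffunP => k; rewrite -!at_ord taunE // atD tau_add.
  rewrite at_hprodn //; apply: hprod_ext => i hi; rewrite taunE //;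
   exact: leq_ltn_trans hi (ltn_ord k).
split.
  move=> x y E; apply/ffunP => i; rewrite -!at_ord.
  apply: (@tau_inj_prefix _ _ _ n.-1) => // k hk.
  have kn : (k < n)%N by rewrite -(prednK n0) ltnS.
  by rewrite -!taunE // E.
move=> a a0.
exists [ffun i : 'I_n.-1 => xinv (at_ a) i].
apply/ffunP => k; rewrite -at_ord taunE //.
rewrite (@tau_prefix _ _ (xinv (at_ a))); first by rewrite tau_xinv // at_ord.
move=> i ik; have h : (i < n.-1)%N.
  by apply: leq_trans ik _; rewrite -ltnS prednK.
by rewrite (at_lt _ h) ffunE.
Qed.
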